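(* Let $\zeta:G\to(0,\infty)$, with $G\subseteq\mathbb{R}^2$ open, be twice continuously differentiable. Then: (i) if $G$ is convex, then $\partial_x\partial_y\log\zeta\equiv0$ on $G$ if and only if $\zeta$ is separable; (ii) $\zeta$ is strictly non-separable if and only if the open set $G':=\{z\in G:\partial_x\partial_y\log\zeta(z)\neq0\}$ is dense in $G$; (iii) if $\mathcal{O}\subseteq G'$ is symmetric, open and convex, then $(\partial_x\partial_y\log\zeta)|_{\mathcal{O}}$ is separable and symmetric if and only if $\zeta|_{\mathcal{O}}$ is pseudo-Gaussian.
   Context: For $G\subseteq\mathbb{R}^2$ open, a function $\varsigma:G\to\mathbb{R}$ is pseudo-Gaussian if there are functions $\varsigma_1,\varsigma_2,\varsigma_3:\mathbb{R}\to\mathbb{R}$ and a fixed sign $\pm$ with $\varsigma(x,y)=\varsigma_1(x)\varsigma_2(y)\exp(\pm\varsigma_3(x)\varsigma_3(y))$ on all of $G$; it is separable if this holds with $\varsigma_3\equiv0$ (i.e. $\varsigma(x,y)=\varsigma_1(x)\varsigma_2(y)$). $\varsigma$ is strictly non-separable if $\varsigma|_{\mathcal{O}}$ is not separable for every nonempty open $\mathcal{O}\subseteq G$. A set $A\subseteq\mathbb{R}^2$ is symmetric if $\tau(A)=A$ for $\tau(u,v)=(v,u)$, and a function $\varphi$ on such a set is symmetric if $\varphi\circ\tau=\varphi$. *)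

(* Defs.v *)
From Stdlib Require Import Reals.
From Coquelicot Require Import Coquelicot.
Open Scope R_scope.

Definition dx (f : R * R -> R) (z : R * R) : R :=
  Derive (fun t => f (t, snd z)) (fst z).
Definition dy (f : R * R -> R) (z : R * R) : R :=
  Derive (fun t => f (fst z, t)) (snd z).

Definition C1_on (G : R * R -> Prop) (f : R * R -> R) : Prop :=
  forall z, G z ->
    ex_derive (fun t => f (t, snd z)) (fst z) /\
    ex_derive (fun t => f (fst z, t)) (snd z) /\
    continuous f z /\ continuous (dx f) z /\ continuous (dy f) z.

Definition C2_on (G : R * R -> Prop) (f : R * R -> R) : Prop :=
  C1_on G f /\ C1_on G (dx f) /\ C1_on G (dy f).

Definition dxdy_log (zeta : R * R -> R) : R * R -> R :=
  dx (dy (fun z => ln (zeta z))).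

Definition convex_set (A : R * R -> Prop) : Prop :=
  forall z w t, A z -> A w -> 0 <= t <= 1 ->
    A (fst z + t * (fst w - fst z), snd z + t * (snd w - snd z)).

Definition symmetric_set (A : R * R -> Prop) : Prop :=
  forall u v, A (u, v) <-> A (v, u).

Definition symmetric_on (A : R * R -> Prop) (phi : R * R -> R) : Prop :=
  forall u v, A (u, v) -> phi (v, u) = phi (u, v).

Definition separable_on (A : R * R -> Prop) (phi : R * R -> R) : Prop :=
  exists s1 s2 : R -> R, forall z, A z -> phi z = s1 (fst z) * s2 (snd z).

Definition pseudo_gaussian_on (A : R * R -> Prop) (phi : R * R -> R) : Prop :=
  exists (s1 s2 s3 : R -> R) (s : R), (s = 1 \/ s = -1) /\
    forall z, A z ->
      phi z = s1 (fst z) * s2 (snd z) * exp (s * (s3 (fst z) * s3 (snd z))).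

Definition strictly_non_separable_on (G : R * R -> Prop) (phi : R * R -> R) : Prop :=
  forall O : R * R -> Prop, open O -> (exists z, O z) ->
    (forall z, O z -> G z) -> ~ separable_on O phi.

Definition dense_in (D G : R * R -> Prop) : Prop :=
  forall z, G z -> forall eps : R, 0 < eps ->
    exists w, D w /\ Rabs (fst w - fst z) < eps /\ Rabs (snd w - snd z) < eps.

(* Main.v *)
Require Import Defs.
From Stdlib Require Import Reals Lra Psatz Classical ClassicalEpsilon.
From Coquelicot Require Import Coquelicot.
Open Scope R_scope.

Lemma open_box (G : R * R -> Prop) z : open G -> G z ->
  exists eps, 0 < eps /\ forall x y, Rabs (x - fst z) < eps -> Rabs (y - snd z) < eps -> G (x,y).
Proof.
  destruct z as [a b]; intros HG Hz. destruct (HG _ Hz) as [e He].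
  exists e; split; [apply cond_pos|]. intros x y Hx Hy; apply He. split; assumption.
Qed.

Lemma loc_of (P : R -> Prop) x eps : 0 < eps ->
  (forall t, Rabs (t - x) < eps -> P t) -> locally x P.
Proof. intros He H. exists (mkposreal eps He). intros t Ht; apply H; exact Ht. Qed.

Lemma box_open (c : R * R) d :
  open (fun w : R * R => Rabs (fst w - fst c) < d /\ Rabs (snd w - snd c) < d).
Proof.
  intros [x y] [Hx Hy]; simpl in *.
  set (e := Rmin (d - Rabs (x - fst c)) (d - Rabs (y - snd c))).
  assert (He : 0 < e) by (unfold e; apply Rmin_glb_lt; lra).
  exists (mkposreal e He). intros [u v] [Hu Hv]. simpl in *.
  change (Rabs (u - x) < e) in Hu. change (Rabs (v - y) < e) in Hv.
  assert (e <= d - Rabs (x - fst c)) by apply Rmin_l.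
  assert (e <= d - Rabs (y - snd c)) by apply Rmin_r.
  split.
  - replace (u - fst c) with ((u - x) + (x - fst c)) by ring.
    eapply Rle_lt_trans; [apply Rabs_triang|]. lra.
  - replace (v - snd c) with ((v - y) + (y - snd c)) by ring.
    eapply Rle_lt_trans; [apply Rabs_triang|]. lra.
Qed.

Lemma between_comb a b y : Rmin a b <= y <= Rmax a b -> exists t, 0 <= t <= 1 /\ y = a + t*(b-a).
Proof.
  intros [H1 H2]. destruct (Req_dec a b) as [E|E].
  - subst. rewrite Rmin_left in H1 by lra. rewrite Rmax_left in H2 by lra.
    exists 0. split; [lra|]. lra.
  - exists ((y - a)/(b - a)). destruct (Rle_dec a b) as [L|L].
    + rewrite Rmin_left in H1 by lra. rewrite Rmax_right in H2 by lra.
      split; [split|field; lra].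
      * apply Rmult_le_pos; [lra|]. apply Rlt_le, Rinv_0_lt_compat; lra.
      * apply (Rmult_le_reg_r (b - a)); [lra|]. unfold Rdiv. rewrite Rmult_assoc, Rinv_l by lra. lra.
    + rewrite Rmin_right in H1 by lra. rewrite Rmax_left in H2 by lra.
      replace ((y - a)/(b-a)) with ((a - y)/(a-b)) by (field; lra).
      split; [split|field; lra].
      * apply Rmult_le_pos; [lra|]. apply Rlt_le, Rinv_0_lt_compat; lra.
      * apply (Rmult_le_reg_r (a - b)); [lra|]. unfold Rdiv. rewrite Rmult_assoc, Rinv_l by lra. lra.
Qed.

Lemma deriv0_eq (f : R -> R) a b :
  (forall t, Rmin a b <= t <= Rmax a b -> is_derive f t 0) -> f a = f b.
Proof.
  intros H. destruct (MVT_gen f a b (fun _ => 0)) as [c [_ Hc]].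
  - intros x Hx. apply H. lra.
  - intros x Hx. apply continuity_pt_filterlim. apply (@ex_derive_continuous R_AbsRing R_NormedModule).
    eexists; apply H; exact Hx.
  - lra.
Qed.

Lemma antideriv (I : R -> Prop) (k : R -> R) :
  (forall a b y, I a -> I b -> Rmin a b <= y <= Rmax a b -> I y) ->
  (forall y, I y -> exists eps, 0 < eps /\ forall t, Rabs (t - y) < eps -> I t) ->
  (forall y, I y -> continuous k y) ->
  exists K : R -> R, forall y, I y -> is_derive K y (k y).
Proof.
  intros Hc Ho Hk. destruct (classic (exists p, I p)) as [[p Hp]|Hn].
  - exists (RInt k p). intros y Hy. apply (is_derive_RInt k (RInt k p) p y); [|apply Hk; exact Hy].
    destruct (Ho y Hy) as [e [He Ht]]. exists (mkposreal e He). intros b Hb.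
    apply (@RInt_correct R_CompleteNormedModule). apply (@ex_RInt_continuous R_CompleteNormedModule k p b). intros z Hz. apply Hk.
    apply (Hc p b z Hp); [apply Ht; exact Hb|exact Hz].
  - exists (fun _ => 0). intros y Hy. exfalso; apply Hn; exists y; exact Hy.
Qed.

Lemma conv_h (U : R*R -> Prop) x x' y t : convex_set U -> U (x,y) -> U (x',y) ->
  Rmin x x' <= t <= Rmax x x' -> U (t,y).
Proof.
  intros Hc H1 H2 Ht. destruct (between_comb _ _ _ Ht) as [s [Hs ->]].
  specialize (Hc _ _ s H1 H2 Hs). simpl in Hc. replace (y + s * (y - y)) with y in Hc by ring. exact Hc.
Qed.

Lemma conv_v (U : R*R -> Prop) x y y' t : convex_set U -> U (x,y) -> U (x,y') ->
  Rmin y y' <= t <= Rmax y y' -> U (x,t).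
Proof.
  intros Hc H1 H2 Ht. destruct (between_comb _ _ _ Ht) as [s [Hs ->]].
  specialize (Hc _ _ s H1 H2 Hs). simpl in Hc. replace (x + s * (x - x)) with x in Hc by ring. exact Hc.
Qed.

Lemma sepB (U : R*R -> Prop) (h : R*R -> R) :
  open U -> convex_set U ->
  (forall z, U z -> ex_derive (fun t => h (fst z, t)) (snd z)) ->
  (forall z, U z -> is_derive (fun t => dy h (t, snd z)) (fst z) 0) ->
  (forall z, U z -> continuous (fun t => dy h (fst z, t)) (snd z)) ->
  exists a b : R -> R, forall z, U z -> h z = a (fst z) + b (snd z).
Proof.
  intros Ho Hc HyD HxD HyC.
  assert (s1 : forall x x' y, U (x,y) -> U (x',y) -> dy h (x,y) = dy h (x',y)).
  { intros x x' y H1 H2. apply (deriv0_eq (fun t => dy h (t,y))). intros t Ht.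
    apply (HxD (t,y)). exact (conv_h U x x' y t Hc H1 H2 Ht). }
  set (xsel := fun y => epsilon (inhabits 0) (fun x => U (x,y))).
  assert (Hxs : forall x y, U (x,y) -> U (xsel y, y)).
  { intros x y H. unfold xsel. apply (epsilon_spec (inhabits 0) (fun x => U (x,y))). exists x; exact H. }
  set (k := fun y => dy h (xsel y, y)).
  set (Q := fun y => exists x, U (x,y)).
  destruct (antideriv Q k) as [K HK].
  - intros a b y [xa Ha] [xb Hb] Hy. destruct (between_comb _ _ _ Hy) as [s [Hs ->]].
    exists (xa + s * (xb - xa)). exact (Hc _ _ s Ha Hb Hs).
  - intros y [x Hx]. destruct (open_box U (x,y) Ho Hx) as [e [He Hb]]. exists e; split; [exact He|].
    intros t Ht. exists x. apply Hb; simpl; [rewrite Rminus_eq_0, Rabs_R0; exact He| exact Ht].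
  - intros y [x Hx]. apply Hxs in Hx. set (x0 := xsel y) in *.
    destruct (open_box U (x0,y) Ho Hx) as [e [He Hb]].
    apply (continuous_ext_loc k (fun t => dy h (x0,t))).
    + apply (loc_of _ _ e He). intros t Ht. unfold k. apply s1.
      * apply Hb; simpl; [rewrite Rminus_eq_0, Rabs_R0; exact He| exact Ht].
      * apply (Hxs x0). apply Hb; simpl; [rewrite Rminus_eq_0, Rabs_R0; exact He| exact Ht].
    + exact (HyC (x0,y) Hx).
  - assert (s5 : forall x y y', U (x,y) -> U (x,y') -> h (x,y) - K y = h (x,y') - K y').
    { intros x y y' H1 H2. apply (deriv0_eq (fun t => h (x,t) - K t)). intros t Ht.
      pose proof (conv_v U x y y' t Hc H1 H2 Ht) as Hu.
      replace 0 with (dy h (x,t) - k t).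
      - apply (@is_derive_minus R_AbsRing R_NormedModule).
        + apply (Derive_correct (fun t0 => h (x,t0))). exact (HyD (x,t) Hu).
        + apply HK. exists x; exact Hu.
      - unfold k. rewrite (s1 (xsel t) x t (Hxs x t Hu) Hu). ring. }
    set (ysel := fun x => epsilon (inhabits 0) (fun y => U (x,y))).
    assert (Hys : forall x y, U (x,y) -> U (x, ysel x)).
    { intros x y H. unfold ysel. apply (epsilon_spec (inhabits 0) (fun y => U (x,y))). exists y; exact H. }
    exists (fun x => h (x, ysel x) - K (ysel x)), K. intros [x y] Hz. simpl.
    rewrite <- (s5 x y (ysel x) Hz (Hys x y Hz)). ring.
Qed.

Definition Hyp (G : R*R -> Prop) (zeta : R*R -> R) :=
  open G /\ (forall z, G z -> 0 < zeta z) /\ C2_on G zeta.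

Definition Lz (zeta : R*R -> R) := fun w => ln (zeta w).

Lemma cont_sec (f : R*R -> R) x y : continuous f (x,y) -> continuous (fun t => f (x,t)) y.
Proof.
  intros Hf. apply (continuous_comp (fun t => (x,t)) f); [|exact Hf].
  intros P [e He]. exists e. intros t Ht. apply He. split; [apply ball_center|exact Ht].
Qed.

Lemma L_dy G zeta z : Hyp G zeta -> G z ->
  is_derive (fun t => Lz zeta (fst z, t)) (snd z) (dy zeta z / zeta z).
Proof.
  intros [HG [Hp [H1 _]]] Hz. destruct (H1 z Hz) as [_ [Hy _]].
  unfold Lz. replace (dy zeta z / zeta z) with (scal (dy zeta z) (/ zeta (fst z, snd z))).
  - apply (is_derive_comp ln (fun t => zeta (fst z, t))).
    + apply is_derive_ln. destruct z; apply Hp; exact Hz.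
    + apply (Derive_correct (fun t => zeta (fst z, t))); exact Hy.
  - destruct z; reflexivity.
Qed.

Lemma Ly_eq G zeta z : Hyp G zeta -> G z -> dy (Lz zeta) z = dy zeta z / zeta z.
Proof. intros H Hz. unfold dy at 1. apply is_derive_unique. exact (L_dy G zeta z H Hz). Qed.

Lemma Ly_x G zeta z : Hyp G zeta -> G z ->
  is_derive (fun t => dy (Lz zeta) (t, snd z)) (fst z)
    ((dx (dy zeta) z * zeta z - dy zeta z * dx zeta z) / (zeta z)^2).
Proof.
  intros H Hz. pose proof H as [HG [Hp [H1 [_ H3]]]]. destruct z as [x y]. simpl.
  destruct (open_box G (x,y) HG Hz) as [e [He Hb]].
  apply (is_derive_ext_loc (fun t => dy zeta (t,y) / zeta (t,y))).
  - apply (loc_of _ _ e He). intros t Ht. symmetry. apply (Ly_eq G zeta (t,y) H).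
    apply Hb; simpl; [exact Ht|rewrite Rminus_eq_0, Rabs_R0; exact He].
  - apply (is_derive_div (fun t => dy zeta (t,y)) (fun t => zeta (t,y))).
    + apply (Derive_correct (fun t => dy zeta (t,y))). exact (proj1 (H3 (x,y) Hz)).
    + apply (Derive_correct (fun t => zeta (t,y))). exact (proj1 (H1 (x,y) Hz)).
    + apply Rgt_not_eq, Hp, Hz.
Qed.

Lemma phi_eq G zeta z : Hyp G zeta -> G z ->
  dxdy_log zeta z = (dx (dy zeta) z * zeta z - dy zeta z * dx zeta z) / (zeta z)^2.
Proof.
  intros H Hz. unfold dxdy_log. change (fun z => ln (zeta z)) with (Lz zeta).
  unfold dx at 1. apply is_derive_unique. exact (Ly_x G zeta z H Hz).
Qed.

Lemma Ly_x' G zeta z : Hyp G zeta -> G z ->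
  is_derive (fun t => dy (Lz zeta) (t, snd z)) (fst z) (dxdy_log zeta z).
Proof. intros H Hz. rewrite (phi_eq G zeta z H Hz). exact (Ly_x G zeta z H Hz). Qed.

Lemma Ly_cont G zeta z : Hyp G zeta -> G z ->
  continuous (fun t => dy (Lz zeta) (fst z, t)) (snd z).
Proof.
  intros H Hz. pose proof H as [HG [Hp [H1 _]]]. destruct z as [x y]. simpl.
  destruct (open_box G (x,y) HG Hz) as [e [He Hb]].
  destruct (H1 (x,y) Hz) as [_ [_ [Hc [_ Hcy]]]].
  apply (continuous_ext_loc _ (fun t => dy zeta (x,t) * / zeta (x,t))).
  - apply (loc_of _ _ e He). intros t Ht. symmetry. apply (Ly_eq G zeta (x,t) H).
    apply Hb; simpl; [rewrite Rminus_eq_0, Rabs_R0; exact He|exact Ht].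
  - apply (continuous_mult (K:=R_AbsRing)).
    + apply cont_sec; exact Hcy.
    + apply (continuous_Rinv_comp (fun t => zeta (x,t))). apply cont_sec; exact Hc.
      apply Rgt_not_eq, Hp, Hz.
Qed.

Lemma phi_cont G zeta z : Hyp G zeta -> G z ->
  continuous (fun t => dxdy_log zeta (fst z, t)) (snd z).
Proof.
  intros H Hz. pose proof H as [HG [Hp [H1 [H2 H3]]]]. destruct z as [x y]. simpl.
  destruct (open_box G (x,y) HG Hz) as [e [He Hb]].
  destruct (H1 (x,y) Hz) as [_ [_ [Hc [Hcx Hcy]]]].
  destruct (H3 (x,y) Hz) as [_ [_ [_ [Hcxy _]]]].
  apply (continuous_ext_loc _ (fun t => (dx (dy zeta) (x,t) * zeta (x,t) - dy zeta (x,t) * dx zeta (x,t)) * / (zeta (x,t) * zeta (x,t)))).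
  - apply (loc_of _ _ e He). intros t Ht. rewrite (phi_eq G zeta (x,t) H).
    + unfold Rdiv. simpl. rewrite Rmult_1_r. reflexivity.
    + apply Hb; simpl; [rewrite Rminus_eq_0, Rabs_R0; exact He|exact Ht].
  - apply (continuous_mult (K:=R_AbsRing)).
    + apply (continuous_minus (V:=R_NormedModule)); apply (continuous_mult (K:=R_AbsRing)); apply cont_sec; assumption.
    + apply (continuous_Rinv_comp (fun t => zeta (x,t) * zeta (x,t))).
      * apply (continuous_mult (K:=R_AbsRing)); apply cont_sec; assumption.
      * apply Rmult_integral_contrapositive; split; apply Rgt_not_eq, Hp, Hz.
Qed.

Lemma Derive_shift (f : R -> R) C y : Derive (fun u => f u + C) y = Derive f y.
Proof. unfold Derive. f_equal. apply Lim_ext. intros h. f_equal. ring. Qed.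

Lemma H0m G zeta x y eps : Hyp G zeta -> 0 < eps ->
  (forall a b, Rabs (a - x) < eps -> Rabs (b - y) < eps -> G (a,b)) ->
  (forall x', Rabs (x' - x) < eps -> exists r, 0 < r /\
      forall u, Rabs (u - y) < eps -> zeta (x',u) = r * zeta (x,u)) ->
  dxdy_log zeta (x,y) = 0.
Proof.
  intros H He Hb Hr. pose proof H as [HG [Hp _]].
  unfold dxdy_log. change (fun z => ln (zeta z)) with (Lz zeta). unfold dx; simpl.
  rewrite <- (Derive_const (dy (Lz zeta) (x,y)) x).
  apply Derive_ext_loc. apply (loc_of _ _ eps He). intros t Ht.
  destruct (Hr t Ht) as [r [Hr0 Hru]].
  unfold dy; simpl. rewrite <- (Derive_shift (fun u => Lz zeta (x,u)) (ln r) y).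
  apply Derive_ext_loc. apply (loc_of _ _ eps He). intros u Hu.
  unfold Lz. rewrite (Hru u Hu). rewrite ln_mult; [ring|exact Hr0|].
  apply Hp, Hb; [rewrite Rminus_eq_0, Rabs_R0; exact He|exact Hu].
Qed.

Lemma sep_dxdy0 G zeta U : Hyp G zeta -> open U -> (forall z, U z -> G z) ->
  separable_on U zeta -> forall z, U z -> dxdy_log zeta z = 0.
Proof.
  intros H HU HUG [s1 [s2 Hs]] [x y] Hz. pose proof H as [HG [Hp _]].
  destruct (open_box U (x,y) HU Hz) as [e [He Hb]]. simpl in Hb.
  apply (H0m G zeta x y e H He). { intros a b Ha Hb'. apply HUG, Hb; assumption. }
  intros x' Hx'.
  assert (Hy0 : Rabs (y - y) < e) by (rewrite Rminus_eq_0, Rabs_R0; exact He).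
  assert (Hx0 : Rabs (x - x) < e) by (rewrite Rminus_eq_0, Rabs_R0; exact He).
  pose proof (Hp _ (HUG _ (Hb x' y Hx' Hy0))) as P1.
  pose proof (Hp _ (HUG _ (Hb x y Hx0 Hy0))) as P2.
  exists (zeta (x',y) / zeta (x,y)). split; [apply Rdiv_lt_0_compat; assumption|].
  intros u Hu.
  assert (E1 := Hs (x',y) (Hb x' y Hx' Hy0)). assert (E2 := Hs (x,y) (Hb x y Hx0 Hy0)).
  assert (E3 := Hs (x',u) (Hb x' u Hx' Hu)). assert (E4 := Hs (x,u) (Hb x u Hx0 Hu)).
  simpl in *. rewrite E1, E2, E3, E4. rewrite E2 in P2.
  assert (s1 x <> 0) by (intro E; rewrite E in P2; lra).
  assert (s2 y <> 0) by (intro E; rewrite E in P2; lra).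
  field. split; assumption.
Qed.

Lemma dxdy0_sep G zeta U : Hyp G zeta -> open U -> convex_set U -> (forall z, U z -> G z) ->
  (forall z, U z -> dxdy_log zeta z = 0) -> separable_on U zeta.
Proof.
  intros H HU Hc HUG H0. pose proof H as [HG [Hp _]].
  destruct (sepB U (Lz zeta) HU Hc) as [a [b Hab]].
  - intros z Hz. eexists. exact (L_dy G zeta z H (HUG z Hz)).
  - intros z Hz. rewrite <- (H0 z Hz). exact (Ly_x' G zeta z H (HUG z Hz)).
  - intros z Hz. exact (Ly_cont G zeta z H (HUG z Hz)).
  - exists (fun x => exp (a x)), (fun y => exp (b y)). intros z Hz.
    rewrite <- exp_plus, <- Hab by exact Hz. unfold Lz. rewrite exp_ln; [reflexivity|].
    apply Hp, HUG, Hz.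
Qed.

Lemma box_convex (c : R*R) d :
  convex_set (fun w : R * R => Rabs (fst w - fst c) < d /\ Rabs (snd w - snd c) < d).
Proof.
  assert (K : forall a b e t, Rabs (a - e) < d -> Rabs (b - e) < d -> 0 <= t <= 1 ->
             Rabs (a + t * (b - a) - e) < d).
  { intros a b e t Ha Hb Ht.
    replace (a + t * (b - a) - e) with ((1 - t) * (a - e) + t * (b - e)) by ring.
    eapply Rle_lt_trans; [apply Rabs_triang|]. rewrite !Rabs_mult.
    rewrite (Rabs_pos_eq (1 - t)) by lra. rewrite (Rabs_pos_eq t) by lra.
    destruct (Rle_dec (Rabs (a - e)) (Rabs (b - e))); nra. }
  intros z w t [H1 H2] [H3 H4] Ht. simpl. split; apply K; assumption.
Qed.

Lemma part1 G zeta : Hyp G zeta -> convex_set G ->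
  ((forall z, G z -> dxdy_log zeta z = 0) <-> separable_on G zeta).
Proof.
  intros H Hc. pose proof H as [HG _]. split.
  - intros H0. apply (dxdy0_sep G zeta G H HG Hc (fun z Hz => Hz) H0).
  - intros Hs. apply (sep_dxdy0 G zeta G H HG (fun z Hz => Hz) Hs).
Qed.

Lemma part2 G zeta : Hyp G zeta ->
  (strictly_non_separable_on G zeta <->
     dense_in (fun z => G z /\ dxdy_log zeta z <> 0) G).
Proof.
  intros H. pose proof H as [HG [Hp _]]. split.
  - intros Hs z Hz eps Heps. apply NNPP. intros Hn.
    destruct (open_box G z HG Hz) as [d [Hd Hb]].
    set (d' := Rmin eps d).
    assert (Hd' : 0 < d') by (apply Rmin_glb_lt; assumption).
    set (O := fun w : R * R => Rabs (fst w - fst z) < d' /\ Rabs (snd w - snd z) < d').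
    assert (HOG : forall w, O w -> G w).
    { intros [a b] [Ha Hb']. apply Hb; eapply Rlt_le_trans; try eassumption; apply Rmin_r. }
    apply (Hs O (box_open z d')).
    + exists z. split; rewrite Rminus_eq_0, Rabs_R0; exact Hd'.
    + exact HOG.
    + apply (dxdy0_sep G zeta O H (box_open z d') (box_convex z d') HOG).
      intros w Hw. apply NNPP. intros Hne. apply Hn. exists w. split; [split; [apply HOG, Hw|exact Hne]|].
      destruct Hw as [Ha Hb']. split; eapply Rlt_le_trans; try eassumption; apply Rmin_l.
  - intros Hd O HO [z Hz] HOG Hs.
    pose proof (sep_dxdy0 G zeta O H HO HOG Hs) as H0.
    destruct (open_box O z HO Hz) as [e [He Hb]].
    destruct (Hd z (HOG z Hz) e He) as [w [[Gw Hw] [H1 H2]]].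
    apply Hw. apply H0. destruct w as [a b]. apply Hb; assumption.
Qed.

Lemma part3b G zeta O : Hyp G zeta ->
  (forall z, O z -> G z /\ dxdy_log zeta z <> 0) ->
  symmetric_set O -> open O ->
  pseudo_gaussian_on O zeta ->
  separable_on O (dxdy_log zeta) /\ symmetric_on O (dxdy_log zeta).
Proof.
  intros H HO Hsym Ho [s1 [s2 [S [s [Hs Hpg]]]]].
  pose proof H as [HG [Hp _]].
  assert (Hs0 : s <> 0) by lra.
  assert (LP : forall x u, O (x,u) -> 0 < s1 x * s2 u /\
             Lz zeta (x,u) = ln (s1 x * s2 u) + s * (S x * S u)).
  { intros x u Hxu. pose proof (Hp _ (proj1 (HO _ Hxu))) as P. rewrite (Hpg _ Hxu) in P. simpl in *.
    assert (Q : 0 < s1 x * s2 u).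
    { pose proof (exp_pos (s * (S x * S u))). destruct (Rlt_le_dec 0 (s1 x * s2 u)); [assumption|nra]. }
    split; [exact Q|]. unfold Lz. rewrite (Hpg _ Hxu); simpl. rewrite ln_mult, ln_exp; [ring|exact Q|apply exp_pos]. }
  assert (LS : forall x x' u, O (x,u) -> O (x',u) ->
             Lz zeta (x',u) = Lz zeta (x,u) + ln (s1 x' / s1 x) + s * (S x' - S x) * S u).
  { intros x x' u H1 H2. destruct (LP x u H1) as [P1 E1]. destruct (LP x' u H2) as [P2 E2].
    rewrite E1, E2.
    assert (s1 x <> 0) by (intro E; rewrite E in P1; lra).
    assert (s2 u <> 0) by (intro E; rewrite E in P1; lra).
    assert (R0 : 0 < s1 x' / s1 x).
    { replace (s1 x' / s1 x) with ((s1 x' * s2 u) / (s1 x * s2 u)) by (field; auto).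
      apply Rdiv_lt_0_compat; assumption. }
    replace (s1 x' * s2 u) with ((s1 x' / s1 x) * (s1 x * s2 u)) by (field; auto).
    rewrite ln_mult by assumption. ring. }
  assert (D1 : forall x y, O (x,y) -> ex_derive S y).
  { intros x y Hxy. destruct (open_box O (x,y) Ho Hxy) as [e [He Hb]]. simpl in Hb.
    assert (Hy0 : Rabs (y - y) < e) by (rewrite Rminus_eq_0, Rabs_R0; exact He).
    assert (Hx0 : Rabs (x - x) < e) by (rewrite Rminus_eq_0, Rabs_R0; exact He).
    destruct (classic (exists x', Rabs (x' - x) < e /\ S x' <> S x)) as [[x' [Hx' Hne]]|Hn].
    - apply (ex_derive_ext_loc (fun u => (Lz zeta (x',u) - Lz zeta (x,u) - ln (s1 x' / s1 x)) / (s * (S x' - S x)))).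
      + apply (loc_of _ _ e He). intros u Hu.
        change ((Lz zeta (x',u) - Lz zeta (x,u) - ln (s1 x' / s1 x)) / (s * (S x' - S x)) = S u).
        rewrite (LS x x' u) by (apply Hb; assumption).
        field. split; [lra|assumption].
      + apply ex_derive_div.
        * apply (@ex_derive_minus R_AbsRing R_NormedModule); [apply (@ex_derive_minus R_AbsRing R_NormedModule)|apply ex_derive_const].
          -- eexists. exact (L_dy G zeta (x',y) H (proj1 (HO _ (Hb x' y Hx' Hy0)))).
          -- eexists. exact (L_dy G zeta (x,y) H (proj1 (HO _ Hxy))).
        * apply ex_derive_const.
        * apply Rmult_integral_contrapositive; split; [assumption|lra].
    - exfalso. apply (proj2 (HO _ Hxy)).
      apply (H0m G zeta x y e H He). { intros a b Ha Hb'. apply (proj1 (HO _ (Hb a b Ha Hb'))). }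
      intros x' Hx'. exists (exp (ln (s1 x' / s1 x))). split; [apply exp_pos|].
      intros u Hu.
      assert (ES : S x' = S x) by (apply NNPP; intro; apply Hn; exists x'; split; assumption).
      assert (E := LS x x' u (Hb x u Hx0 Hu) (Hb x' u Hx' Hu)). rewrite ES in E.
      replace (zeta (x',u)) with (exp (Lz zeta (x',u))).
      2:{ unfold Lz. apply exp_ln. apply Hp, (HO _ (Hb x' u Hx' Hu)). }
      replace (zeta (x,u)) with (exp (Lz zeta (x,u))).
      2:{ unfold Lz. apply exp_ln. apply Hp, (HO _ (Hb x u Hx0 Hu)). }
      rewrite E, <- exp_plus. f_equal. ring. }
  assert (D2 : forall x y, O (x,y) -> dxdy_log zeta (x,y) = s * Derive S x * Derive S y).
  { intros x y Hxy. destruct (open_box O (x,y) Ho Hxy) as [e [He Hb]]. simpl in Hb.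
    assert (Hy0 : Rabs (y - y) < e) by (rewrite Rminus_eq_0, Rabs_R0; exact He).
    assert (Hx0 : Rabs (x - x) < e) by (rewrite Rminus_eq_0, Rabs_R0; exact He).
    assert (DSy := D1 x y Hxy). assert (DSx := D1 y x (proj1 (Hsym x y) Hxy)).
    assert (Ly : forall x', Rabs (x' - x) < e ->
       dy (Lz zeta) (x',y) = dy (Lz zeta) (x,y) + s * (S x' - S x) * Derive S y).
    { intros x' Hx'. unfold dy at 1; simpl.
      apply is_derive_unique.
      apply (is_derive_ext_loc (fun u => Lz zeta (x,u) + ln (s1 x' / s1 x) + s * (S x' - S x) * S u)).
      - apply (loc_of _ _ e He). intros u Hu. symmetry. apply LS; apply Hb; assumption.
      - apply (@is_derive_plus R_AbsRing R_NormedModule).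
        + replace (dy (Lz zeta) (x,y)) with (dy (Lz zeta) (x,y) + 0) by ring.
          apply (@is_derive_plus R_AbsRing R_NormedModule).
          * apply (Derive_correct (fun u => Lz zeta (x,u))). eexists. exact (L_dy G zeta (x,y) H (proj1 (HO _ Hxy))).
          * apply (@is_derive_const R_AbsRing R_NormedModule).
        + apply (is_derive_scal (fun u => S u)). apply Derive_correct; exact DSy. }
    unfold dxdy_log. change (fun z => ln (zeta z)) with (Lz zeta). unfold dx; simpl.
    apply is_derive_unique.
    apply (is_derive_ext_loc (fun t => dy (Lz zeta) (x,y) + s * (S t - S x) * Derive S y)).
    - apply (loc_of _ _ e He). intros t Ht. symmetry. apply Ly; exact Ht.
    - replace (s * Derive S x * Derive S y) with (0 + ((s * Derive S y) * (Derive S x - 0))) by ring.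
      apply (@is_derive_plus R_AbsRing R_NormedModule); [apply (@is_derive_const R_AbsRing R_NormedModule)|].
      apply (is_derive_ext (fun t => (s * Derive S y) * (S t - S x))); [intros t; change (s * Derive S y * (S t - S x) = s * (S t - S x) * Derive S y); ring|].
      apply (is_derive_scal (fun t => S t - S x)).
      apply (@is_derive_minus R_AbsRing R_NormedModule); [apply Derive_correct; exact DSx|apply (@is_derive_const R_AbsRing R_NormedModule)]. }
  split.
  - exists (fun x => s * Derive S x), (Derive S). intros [x y] Hz. simpl. apply D2; exact Hz.
  - intros u v Huv. rewrite (D2 u v Huv), (D2 v u (proj1 (Hsym u v) Huv)). ring.
Qed.

Lemma part3a G zeta O : Hyp G zeta ->
  (forall z, O z -> G z /\ dxdy_log zeta z <> 0) ->
  symmetric_set O -> open O -> convex_set O ->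
  separable_on O (dxdy_log zeta) -> symmetric_on O (dxdy_log zeta) ->
  pseudo_gaussian_on O zeta.
Proof.
  intros H HO Hsym Ho Hc [f1 [f2 Hf]] Hsy.
  pose proof H as [HG [Hp _]].
  destruct (classic (exists z, O z)) as [[[x0 y0] Hz0]|Hn].
  2:{ exists (fun _ => 0), (fun _ => 0), (fun _ => 0), 1. split; [left; reflexivity|].
      intros z Hz; exfalso; apply Hn; exists z; exact Hz. }
  assert (F1 : forall x y, O (x,y) -> f1 x * f2 y = f1 y * f2 x /\
             f1 x <> 0 /\ f2 y <> 0 /\ f1 y <> 0 /\ f2 x <> 0).
  { intros x y Hxy. pose proof (proj2 (HO _ Hxy)) as N1.
    assert (Hyx := proj1 (Hsym x y) Hxy).
    pose proof (Hsy x y Hxy) as E. rewrite (Hf _ Hxy), (Hf _ Hyx) in E. rewrite (Hf _ Hxy) in N1.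
    simpl in *.
    assert (f1 x <> 0) by (intro Z; apply N1; rewrite Z; ring).
    assert (f2 y <> 0) by (intro Z; apply N1; rewrite Z; ring).
    assert (f1 y <> 0) by (intro Z; apply N1; rewrite <- E, Z; ring).
    assert (f2 x <> 0) by (intro Z; apply N1; rewrite <- E, Z; ring).
    repeat split; auto. }
  set (r := fun t => f1 t / f2 t).
  assert (F2 : forall x y, O (x,y) -> r x = r y).
  { intros x y Hxy. destruct (F1 x y Hxy) as [E [A [B [C D]]]]. unfold r.
    field_simplify_eq; [|split; assumption]. lra. }
  set (I := fun y => exists x, O (x,y)).
  assert (Iint : forall a b y, I a -> I b -> Rmin a b <= y <= Rmax a b -> I y).
  { intros a b y [xa Ha] [xb Hb] Hy. destruct (between_comb _ _ _ Hy) as [s [Hs ->]].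
    exists (xa + s * (xb - xa)). exact (Hc _ _ s Ha Hb Hs). }
  assert (Iopen : forall y, I y -> exists eps, 0 < eps /\ forall t, Rabs (t - y) < eps -> I t).
  { intros y [x Hx]. destruct (open_box O (x,y) Ho Hx) as [e [He Hb]]. exists e; split; [exact He|].
    intros t Ht. exists x. apply Hb; simpl; [rewrite Rminus_eq_0, Rabs_R0; exact He| exact Ht]. }
  assert (Ix : forall x y, O (x,y) -> I x) by (intros x y Hxy; exists y; apply Hsym; exact Hxy).
  assert (F4 : forall y, I y -> is_derive r y 0).
  { intros y [x Hx]. destruct (open_box O (x,y) Ho Hx) as [e [He Hb]]. simpl in Hb.
    apply (is_derive_ext_loc (fun _ => r y)).
    - apply (loc_of _ _ e He). intros t Ht.
      rewrite <- (F2 x y Hx). apply F2. apply Hb; [rewrite Rminus_eq_0, Rabs_R0; exact He| exact Ht].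
    - apply (@is_derive_const R_AbsRing R_NormedModule). }
  set (c := r y0).
  assert (F5 : forall t, I t -> r t = c).
  { intros t Ht. unfold c. apply deriv0_eq. intros u Hu. apply F4.
    apply (Iint t y0 u Ht (ex_intro _ x0 Hz0) Hu). }
  assert (Hphi : forall x y, O (x,y) -> dxdy_log zeta (x,y) = c * f2 x * f2 y).
  { intros x y Hxy. rewrite (Hf _ Hxy). simpl. destruct (F1 x y Hxy) as [_ [A [B [C D]]]].
    rewrite <- (F5 x (Ix x y Hxy)). unfold r. field. exact D. }
  assert (Hc0 : c <> 0).
  { intro Z. apply (proj2 (HO _ Hz0)). rewrite (Hphi x0 y0 Hz0), Z. ring. }
  assert (F6 : forall y, I y -> continuous f2 y).
  { intros y [x Hx]. destruct (open_box O (x,y) Ho Hx) as [e [He Hb]]. simpl in Hb.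
    destruct (F1 x y Hx) as [_ [A [B [C D]]]].
    apply (continuous_ext_loc f2 (fun t => dxdy_log zeta (x,t) * / (c * f2 x))).
    - apply (loc_of _ _ e He). intros t Ht.
      change (dxdy_log zeta (x,t) * / (c * f2 x) = f2 t).
      rewrite (Hphi x t) by (apply Hb; [rewrite Rminus_eq_0, Rabs_R0; exact He| exact Ht]).
      field. split; assumption.
    - apply (continuous_mult (K:=R_AbsRing)).
      + exact (phi_cont G zeta (x,y) H (proj1 (HO _ Hx))).
      + apply (@continuous_const R_UniformSpace R_UniformSpace). }
  destruct (antideriv I f2 Iint Iopen F6) as [F HF].
  set (g := fun w : R * R => Lz zeta w - c * F (fst w) * F (snd w)).
  assert (G1 : forall x y, O (x,y) ->
     is_derive (fun t => g (x,t)) y (dy (Lz zeta) (x,y) - c * F x * f2 y)).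
  { intros x y Hxy. unfold g; simpl.
    apply (@is_derive_minus R_AbsRing R_NormedModule).
    - apply (Derive_correct (fun t => Lz zeta (x,t))). eexists. exact (L_dy G zeta (x,y) H (proj1 (HO _ Hxy))).
    - apply (is_derive_scal F y (c * F x)). apply HF. exists x; exact Hxy. }
  assert (G2 : forall x y, O (x,y) -> dy g (x,y) = dy (Lz zeta) (x,y) - c * F x * f2 y).
  { intros x y Hxy. unfold dy at 1. apply is_derive_unique. exact (G1 x y Hxy). }
  destruct (sepB O g Ho Hc) as [a [b Hab]].
  - intros [x y] Hz. eexists. exact (G1 x y Hz).
  - intros [x y] Hz. simpl. destruct (open_box O (x,y) Ho Hz) as [e [He Hb]]. simpl in Hb.
    apply (is_derive_ext_loc (fun t => dy (Lz zeta) (t,y) - c * F t * f2 y)).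
    + apply (loc_of _ _ e He). intros t Ht. symmetry. apply G2.
      apply Hb; [exact Ht|rewrite Rminus_eq_0, Rabs_R0; exact He].
    + replace 0 with (dxdy_log zeta (x,y) - (c * f2 x * f2 y)) by (rewrite Hphi by exact Hz; ring).
      apply (@is_derive_minus R_AbsRing R_NormedModule).
      * exact (Ly_x' G zeta (x,y) H (proj1 (HO _ Hz))).
      * apply (is_derive_ext (fun t => (c * f2 y) * F t)).
        { intros t. change ((c * f2 y) * F t = c * F t * f2 y). ring. }
        replace (c * f2 x * f2 y) with ((c * f2 y) * f2 x) by ring.
        apply (is_derive_scal F x (c * f2 y)). apply HF. exact (Ix x y Hz).
  - intros [x y] Hz. simpl. destruct (open_box O (x,y) Ho Hz) as [e [He Hb]]. simpl in Hb.
    apply (continuous_ext_loc _ (fun t => dy (Lz zeta) (x,t) - c * F x * f2 t)).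
    + apply (loc_of _ _ e He). intros t Ht. symmetry. apply G2.
      apply Hb; [rewrite Rminus_eq_0, Rabs_R0; exact He|exact Ht].
    + apply (continuous_minus (V:=R_NormedModule)).
      * exact (Ly_cont G zeta (x,y) H (proj1 (HO _ Hz))).
      * apply (continuous_mult (K:=R_AbsRing)).
        -- apply (@continuous_const R_UniformSpace R_UniformSpace).
        -- apply F6. exists x; exact Hz.
  - assert (Hz : forall z, O z -> zeta z = exp (a (fst z)) * exp (b (snd z)) * exp (c * (F (fst z) * F (snd z)))).
    { intros z Hz. rewrite <- !exp_plus. rewrite <- (exp_ln (zeta z)) by (apply Hp, (HO _ Hz)).
      f_equal. change (ln (zeta z)) with (Lz zeta z).
      replace (Lz zeta z) with (g z + c * F (fst z) * F (snd z)) by (unfold g; ring).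
      rewrite (Hab z Hz). ring. }
    destruct (Rlt_le_dec 0 c) as [Cp|Cn].
    + exists (fun x => exp (a x)), (fun y => exp (b y)), (fun t => sqrt c * F t), 1.
      split; [left; reflexivity|]. intros z Hz'. rewrite (Hz z Hz'). f_equal. f_equal.
      replace (1 * (sqrt c * F (fst z) * (sqrt c * F (snd z)))) with ((sqrt c * sqrt c) * (F (fst z) * F (snd z))) by ring.
      rewrite sqrt_sqrt by lra. reflexivity.
    + exists (fun x => exp (a x)), (fun y => exp (b y)), (fun t => sqrt (- c) * F t), (-1).
      split; [right; reflexivity|]. intros z Hz'. rewrite (Hz z Hz'). f_equal. f_equal.
      replace (-1 * (sqrt (-c) * F (fst z) * (sqrt (-c) * F (snd z)))) with (- (sqrt (-c) * sqrt (-c)) * (F (fst z) * F (snd z))) by ring.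
      rewrite sqrt_sqrt by lra. ring.
Qed.

Theorem lemma3p11 (G : R * R -> Prop) (zeta : R * R -> R) :
  open G ->
  (forall z, G z -> 0 < zeta z) ->
  C2_on G zeta ->
  (convex_set G ->
     ((forall z, G z -> dxdy_log zeta z = 0) <-> separable_on G zeta)) /\
  (strictly_non_separable_on G zeta <->
     dense_in (fun z => G z /\ dxdy_log zeta z <> 0) G) /\
  (forall O : R * R -> Prop,
     (forall z, O z -> G z /\ dxdy_log zeta z <> 0) ->
     symmetric_set O -> open O -> convex_set O ->
     ((separable_on O (dxdy_log zeta) /\ symmetric_on O (dxdy_log zeta)) <->
      pseudo_gaussian_on O zeta)).
Proof.
  intros HG Hp HC2.
  assert (H : Hyp G zeta) by (split; [|split]; assumption).
  split; [exact (part1 G zeta H)|split; [exact (part2 G zeta H)|]].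
  intros O HO Hsym Hop Hcv. split.
  - intros [Hs Hsy]. exact (part3a G zeta O H HO Hsym Hop Hcv Hs Hsy).
  - intros Hpg. exact (part3b G zeta O H HO Hsym Hop Hpg).
Qed.
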